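(* For integers $n\ge k\ge 0$ define the Salié coefficients $s(n,k)$ by $$\sum_{n,k\ge 0}\frac{x^{2n}}{(2n)!}\,s(n,k)\,y^{k}=\frac{\cosh\!\left(\tfrac12 x\sqrt{1+4y}\right)}{\cosh\!\left(\tfrac12 x\right)},$$ and set $\epsilon(n,k)=|s(n,k)|/4^{k}$. Then for all $n>1$ and $1\le k\le n-1$, $$\epsilon(n,k)>2\,\epsilon(n,k+1)\quad\text{and}\quad \epsilon(n,k)>\sum_{l=k+1}^{n}\epsilon(n,l).$$ *)

(* Defs.v *)
From mathcomp Require Import all_boot all_order all_algebra.
Set Implicit Arguments. Unset Strict Implicit. Unset Printing Implicit Defensive.
Import Order.TTheory GRing.Theory Num.Theory.
Local Open Scope ring_scope.

(* Salie coefficients s(n,k) are characterized by the generating-function identity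
     sum_{n,k} x^(2n)/(2n)! s(n,k) y^k = cosh(x/2 sqrt(1+4y)) / cosh(x/2)
   as formal power series.  Multiplying by cosh(x/2) = sum_n x^(2n)/(2n)! 4^(-n)
   and using cosh(x/2 sqrt(1+4y)) = sum_n x^(2n)/(2n)! 4^(-n) (1+4y)^n,
   comparing the coefficients of x^(2n)/(2n)! y^k gives exactly: *)
Definition salie_gf (s : nat -> nat -> rat) : Prop :=
  forall n k : nat,
    \sum_(m < n.+1) ('C(n.*2, m.*2))%:R * (4 ^+ (n - m))^-1 * s m k
    = ('C(n, k))%:R * 4 ^+ k / 4 ^+ n.

Definition salie_eps (s : nat -> nat -> rat) (n k : nat) : rat :=
  `|s n k| / 4 ^+ k.

(* Main.v *)
Require Import Defs.
From mathcomp Require Import all_boot all_order all_algebra.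
From mathcomp Require Import ring lra zify.
Import Order.TTheory GRing.Theory Num.Theory.
Local Open Scope ring_scope.

Definition aa (s : nat -> nat -> rat) (n k : nat) : rat := s n k * 4 ^+ n / 4 ^+ k.

Lemma four_neq0 (j : nat) : (4 : rat) ^+ j != 0.
Proof. by rewrite expf_neq0. Qed.

Lemma hA (s : nat -> nat -> rat) (hs : salie_gf s) n k :
  \sum_(m < n.+1) ('C(n.*2, m.*2))%:R * aa s m k = ('C(n,k))%:R.
Proof.
have := hs n k.
have e : forall m : 'I_n.+1, ('C(n.*2, m.*2))%:R * (4 ^+ (n - m))^-1 * s m k
   = ('C(n.*2, m.*2))%:R * aa s m k * (4 ^+ k / 4 ^+ n) :> rat.
  move=> m; rewrite /aa exprB ?unitfE //; last by rewrite -ltnS.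
  have := four_neq0 n; have := four_neq0 m; have := four_neq0 k.
  move=> h1 h2 h3; field; rewrite ?h1 ?h2 ?h3 //.
rewrite (eq_bigr _ (fun m _ => e m)) -mulr_suml => h.
have : (\sum_(i < n.+1) ('C(n.*2, i.*2))%:R * aa s i k) * (4 ^+ k / 4 ^+ n)
   = ('C(n, k))%:R * (4 ^+ k / 4 ^+ n) by rewrite h mulrA.
move/mulIf; apply; by rewrite mulf_neq0 ?invr_eq0 ?four_neq0.
Qed.
Lemma binid (N k : nat) :
  (((k.*2.+2) * (k.*2.+1)) * 'C(N, k.+1) + (4 * k.+1 * k.+2) * 'C(N, k.+2)
  = (N.*2 * (N.*2).-1) * 'C(N.-1, k))%N.
Proof.
case: N => [|N]; first by rewrite !bin0n; lia.
have hX := mul_bin_diag N.+1 k. have hZ := mul_bin_left N.+1 k.+1.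
rewrite /= in hX.
case: (leqP k N) => hk.
  move: hX hZ; set X := 'C(N, k); set Y := 'C(N.+1, k.+1); set Z := 'C(N.+1, k.+2).
  rewrite -!muln2 /=. move=> hX hZ. nia.
rewrite !bin_small //; lia.
Qed.

Lemma cm (N i : nat) :
  ('C(N.*2.+2, i.*2.+2) * (i.*2.+2 * i.*2.+1) = (N.*2.+2 * N.*2.+1) * 'C(N.*2, i.*2))%N.
Proof.
have h1 := mul_bin_diag N.*2.+2 i.*2.+1.
have h2 := mul_bin_diag N.*2.+1 i.*2.
rewrite /= in h1 h2. 
rewrite mulnA (mulnC _ i.*2.+2) -h1 -mulnA (mulnC _ i.*2.+1) -h2; lia.
Qed.

Lemma lastC (N : nat) (f : nat -> rat) :
  \sum_(m < N.+1) ('C(N.*2, m.*2))%:R * f m = \sum_(m < N) ('C(N.*2, m.*2))%:R * f m + f N.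
Proof. by rewrite big_ord_recr /= binn mul1r. Qed.

Lemma uniq0 (T : nat -> rat) :
  (forall N, \sum_(m < N.+1) ('C(N.*2, m.*2))%:R * T m = 0) -> forall n, T n = 0.
Proof.
move=> H n; elim: n {-2}n (leqnn n) => [|n IH] m hm.
  by move: (H m); rewrite lastC; move: hm; rewrite leqn0 => /eqP -> ; rewrite big_ord0 add0r.
move: (H m); rewrite lastC big1 ?add0r // => i _.
rewrite IH ?mulr0 //; have := ltn_ord i; lia.
Qed.

Lemma aa_big (s : nat -> nat -> rat) (hs : salie_gf s) n k : (n < k)%N -> aa s n k = 0.
Proof.
elim: n {-2}n (leqnn n) => [|n IH] m hm hk.
  move: hm hk; rewrite leqn0 => /eqP -> hk.
  by move: (hA _ hs 0 k); rewrite (lastC 0 (fun i => aa s i k)) big_ord0 add0r bin_small.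
move: (hA _ hs m k); rewrite (lastC m (fun i => aa s i k)) bin_small // big1 ?add0r // => i _.
rewrite IH ?mulr0 //; have := ltn_ord i; lia.
Qed.

Lemma aa_diag (s : nat -> nat -> rat) (hs : salie_gf s) n : aa s n n = 1.
Proof.
move: (hA _ hs n n); rewrite (lastC n (fun i => aa s i n)) binn big1 ?add0r // => i _.
by rewrite aa_big ?mulr0.
Qed.

Lemma aa_col0 (s : nat -> nat -> rat) (hs : salie_gf s) n : aa s n 0 = (n == 0%N)%:R.
Proof.
apply/eqP; rewrite -subr_eq0; apply/eqP; move: n.
apply: uniq0 => N.
under eq_bigr do rewrite mulrBr.
rewrite sumrB (hA _ hs) bin0 big_ord_recl /= big1 ?addr0 ?bin0 ?mulr1 ?subrr // => i _.
by rewrite mulr0.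
Qed.

Definition cc (m : nat) : rat := ((m.*2 * (m.*2).-1)%N)%:R.

Lemma hB (s : nat -> nat -> rat) (hs : salie_gf s) N k :
  \sum_(m < N.+1) ('C(N.*2, m.*2))%:R * (cc m * aa s m.-1 k) = cc N * ('C(N.-1, k))%:R.
Proof.
case: N => [|N].
  by rewrite big_ord_recl big_ord0 /cc /= !mul0r !mulr0 addr0.
rewrite big_ord_recl /cc /= mul0r mulr0 add0r.
rewrite -(hA _ hs N k) mulr_sumr; apply: eq_bigr => i _.
rewrite /bump /= add1n !doubleS /= mulrA -natrM cm natrM; ring.
Qed.

Lemma rec_aa (s : nat -> nat -> rat) (hs : salie_gf s) n k :
  ((k.*2.+2 * k.*2.+1)%N)%:R * aa s n.+1 k.+1 + ((4 * k.+1 * k.+2)%N)%:R * aa s n.+1 k.+2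
  = cc n.+1 * aa s n k.
Proof.
pose T m := ((k.*2.+2 * k.*2.+1)%N)%:R * aa s m k.+1 + ((4 * k.+1 * k.+2)%N)%:R * aa s m k.+2
   - cc m * aa s m.-1 k.
suff HT : forall N, \sum_(m < N.+1) ('C(N.*2, m.*2))%:R * T m = 0.
  by move: (uniq0 _ HT n.+1); rewrite /T /= => /eqP; rewrite subr_eq0 => /eqP.
move=> N; rewrite /T.
under eq_bigr do rewrite mulrBr mulrDr (mulrCA _ ((k.*2.+2 * k.*2.+1)%N)%:R) (mulrCA _ ((4 * k.+1 * k.+2)%N)%:R).
rewrite sumrB big_split /= -!mulr_sumr !(hA _ hs) (hB _ hs).
rewrite /cc; have := congr1 (fun x : nat => x%:R : rat) (binid N k); rewrite /= natrD !(natrM rat) => ->; exact: subrr.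
Qed.

Lemma t1 (k : nat) : ((k.*2.+2 * k.*2.+1)%N)%:R = (2*k%:R+2)*(2*k%:R+1) :> rat.
Proof. rewrite -muln2 natrM !mulrS natrM. ring. Qed.
Lemma t2 (k : nat) : ((4 * k.+1 * k.+2)%N)%:R = 4*(k%:R+1)*(k%:R+2) :> rat.
Proof. rewrite !natrM !mulrS. ring. Qed.
Lemma t3 (k : nat) : cc k.+1 = (2*k%:R+2)*(2*k%:R+1) :> rat.
Proof. rewrite /cc doubleS /= -muln2 natrM !mulrS natrM. ring. Qed.

Definition bb (s : nat -> nat -> rat) n k := (-1) ^+ (n + k) * aa s n k.

Lemma sgnsq (m : nat) : (-1) ^+ m * (-1) ^+ m = 1 :> rat.
Proof. by rewrite -exprD addnn -mul2n exprM sqrrN !expr1n. Qed.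

Lemma aa_bb s n k : aa s n k = (-1) ^+ (n + k) * bb s n k.
Proof. by rewrite /bb mulrA sgnsq mul1r. Qed.

Lemma cancel_sg (sg A B C x y z : rat) : sg * sg = 1 ->
  A * (sg * x) = C * (sg * y) + B * (sg * z) -> A * x = C * y + B * z.
Proof.
move=> h E.
have E2 := congr1 (fun w => sg * w) E; cbv beta in E2.
have hs' : forall w, sg * (sg * w) = w by move=> w; rewrite mulrA h mul1r.
by rewrite mulrDr !(mulrCA sg) !hs' in E2.
Qed.

Lemma rec_bb (s : nat -> nat -> rat) (hs : salie_gf s) n k :
  (2*k%:R+2)*(2*k%:R+1) * bb s n.+1 k.+1
  = (2*n%:R+2)*(2*n%:R+1) * bb s n k + 4*(k%:R+1)*(k%:R+2) * bb s n.+1 k.+2.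
Proof.
have := rec_aa s hs n k; rewrite t1 t2 t3 !aa_bb.
have -> : (n.+1 + k.+1 = (n + k).+2)%N by lia.
have -> : (n.+1 + k.+2 = (n + k).+3)%N by lia.
rewrite !exprS !mulN1r !opprK.
set sg := (-1) ^+ (n + k).
have hs' : forall x, sg * (sg * x) = x by move=> x; rewrite mulrA sgnsq mul1r.
set A := (2*k%:R+2)*(2*k%:R+1). set B := 4*(k%:R+1)*(k%:R+2).
set C := (2*n%:R+2)*(2*n%:R+1).
move=> H.
have E : A * (sg * bb s n.+1 k.+1) = C * (sg * bb s n k) + B * (sg * bb s n.+1 k.+2).
  rewrite -H; ring.
move: E; apply: cancel_sg; exact: sgnsq.
Qed.

Lemma bb_big s (hs : salie_gf s) n k : (n < k)%N -> bb s n k = 0.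
Proof. by move=> h; rewrite /bb aa_big ?mulr0. Qed.
Lemma bb_diag s (hs : salie_gf s) n : bb s n n = 1.
Proof. by rewrite /bb aa_diag // mulr1 addnn -mul2n exprM sqrrN !expr1n. Qed.
Lemma bb_col0 s (hs : salie_gf s) n : bb s n 0 = (n == 0%N)%:R.
Proof. by rewrite /bb aa_col0 // addn0; case: n => [|n] //=; rewrite mulr0. Qed.

Lemma natS2 (j : nat) : (j.+2)%:R = j%:R + 2 :> rat.
Proof. by rewrite -addn2 natrD. Qed.
Lemma natS1 (j : nat) : (j.+1)%:R = j%:R + 1 :> rat.
Proof. by rewrite -addn1 natrD. Qed.

Lemma hi_ok s (hs : salie_gf s) n k : (n.+1 <= k)%N ->
  0 <= bb s n.+1 k /\ ((0 < k <= n.+1)%N -> 0 < bb s n.+1 k).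
Proof.
rewrite leq_eqVlt => /orP [/eqP <-|h].
  by rewrite bb_diag //; split => // _; lra.
by rewrite bb_big //; split => //; lia.
Qed.

Lemma pos_step s (hs : salie_gf s) n (Hy : forall k, 0 <= bb s n k) :
  forall k, 0 <= bb s n.+1 k /\ ((0 < k <= n.+1)%N -> 0 < bb s n.+1 k).
Proof.
suff H : forall d k, (n.+1 <= k + d)%N ->
   0 <= bb s n.+1 k /\ ((0 < k <= n.+1)%N -> 0 < bb s n.+1 k).
  by move=> k; apply: (H n.+1); lia.
elim=> [|d IH] k hk; first by apply: hi_ok => //; lia.
case: (leqP n.+1 k) => hk'; first by apply: hi_ok.
case: k hk hk' => [|j] hk hk'.
  by rewrite bb_col0 //; split => //; lia.
have [_ IH2] := IH j.+2 ltac:(lia).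
have hx2 : 0 < bb s n.+1 j.+2 by apply: IH2; lia.
have hy := Hy j.
have hr := rec_bb s hs n j.
have hj : 0 <= j%:R :> rat by rewrite ler0n.
have hn : 0 <= n%:R :> rat by rewrite ler0n.
have hCy : 0 <= (2*n%:R+2)*(2*n%:R+1) * bb s n j.
  by apply: mulr_ge0 => //; apply: mulr_ge0; lra.
have h1 : 0 < 4*(j%:R+1) :> rat by apply: mulr_gt0; lra.
have hB : 0 < 4*(j%:R+1)*(j%:R+2) :> rat by apply: mulr_gt0 => //; lra.
have hBx : 0 < 4*(j%:R+1)*(j%:R+2) * bb s n.+1 j.+2 by apply: mulr_gt0.
have hA : 0 < (2*j%:R+2)*(2*j%:R+1) :> rat by apply: mulr_gt0; lra.
have hAx : 0 < (2*j%:R+2)*(2*j%:R+1) * bb s n.+1 j.+1 by rewrite hr; lra.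
have hpos : 0 < bb s n.+1 j.+1 by rewrite -(pmulr_rgt0 _ hA).
by split => [|_]; lra.
Qed.

Lemma D_step s (hs : salie_gf s) n (Hy0 : forall k, 0 <= bb s n k)
  (HyM : forall k, 2 * bb s n k.+2 <= bb s n k.+1)
  (Hx0 : forall k, 0 <= bb s n.+1 k) :
  forall j, 4*(j%:R+2)*(j%:R+3) * bb s n.+1 j.+3 <= (2*n%:R+2)*(2*n%:R+1) * bb s n j.+1.
Proof.
have hn : 0 <= n%:R :> rat by rewrite ler0n.
have hC : 0 <= (2*n%:R+2)*(2*n%:R+1) :> rat by apply: mulr_ge0; lra.
suff H : forall d j, (n.+1 <= j + d)%N ->
   4*(j%:R+2)*(j%:R+3) * bb s n.+1 j.+3 <= (2*n%:R+2)*(2*n%:R+1) * bb s n j.+1.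
  by move=> j; apply: (H n.+1); lia.
elim=> [|d IH] j hj.
  rewrite bb_big //; last by lia.
  by rewrite mulr0; apply: mulr_ge0.
have IH1 := IH j.+1 ltac:(lia).
have hr := rec_bb s hs n j.+2.
rewrite (natS1 j) in IH1. rewrite (natS2 j) in hr.
have hjj : 0 <= j%:R :> rat by rewrite ler0n.
have hM := HyM j.
have hx3 := Hx0 j.+3.
set C := (2*n%:R+2)*(2*n%:R+1) in IH1 hr hC *.
set y1 := bb s n j.+1 in hM *. set y2 := bb s n j.+2 in hM IH1 hr.
set x3 := bb s n.+1 j.+3 in hr hx3 *. set x4 := bb s n.+1 j.+4 in IH1 hr.
set J := j%:R in IH1 hr hjj *.
have h3 : C * (2 * y2) <= C * y1 by apply: ler_wpM2l.
have h4 : 4 * (J + 2) * (J + 3) * x3 <= (2 * (J + 2) + 2) * (2 * (J + 2) + 1) * x3.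
  by apply: ler_wpM2r => //; lra.
have e5 : 4 * (J + 1 + 2) * (J + 1 + 3) = 4 * (J + 2 + 1) * (J + 2 + 2) by ring.
rewrite e5 in IH1.
lra.
Qed.

Lemma M_step s (hs : salie_gf s) n (Hy0 : forall k, 0 <= bb s n k)
  (HyM : forall k, 2 * bb s n k.+2 <= bb s n k.+1)
  (Hx0 : forall k, 0 <= bb s n.+1 k) :
  forall k, 2 * bb s n.+1 k.+2 <= bb s n.+1 k.+1 /\
    (0 < bb s n.+1 k.+2 -> 2 * bb s n.+1 k.+2 < bb s n.+1 k.+1).
Proof.
have hn : 0 <= n%:R :> rat by rewrite ler0n.
have hC : 0 <= (2*n%:R+2)*(2*n%:R+1) :> rat by apply: mulr_ge0; lra.
case=> [|j].
  have hr := rec_bb s hs n 0.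
  have hCy : 0 <= (2*n%:R+2)*(2*n%:R+1) * bb s n 0 by apply: mulr_ge0.
  have hx := Hx0 2.
  rewrite mulr0n in hr.
  split; [|move=> hp]; lra.
have hD := D_step _ hs _ Hy0 HyM Hx0 j.
have hr := rec_bb s hs n j.+1.
rewrite (natS1 j) in hr.
have hjj : 0 <= j%:R :> rat by rewrite ler0n.
have hx3 := Hx0 j.+3.
set C := (2*n%:R+2)*(2*n%:R+1) in hD hr hC *.
set x2 := bb s n.+1 j.+2 in hr *. set x3 := bb s n.+1 j.+3 in hr hx3 hD *.
set y1 := bb s n j.+1 in hD hr.
set J := j%:R in hr hjj hD *.
have hA : 0 < (2 * (J + 1) + 2) * (2 * (J + 1) + 1) by apply: mulr_gt0; lra.
have e : 4 * (J + 1 + 1) * (J + 1 + 2) = 4 * (J + 2) * (J + 3) by ring.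
rewrite e in hr.
have key : (2 * (J + 1) + 2) * (2 * (J + 1) + 1) * (2 * x3) <= (2 * (J + 1) + 2) * (2 * (J + 1) + 1) * x2
   /\ (0 < x3 -> (2 * (J + 1) + 2) * (2 * (J + 1) + 1) * (2 * x3) < (2 * (J + 1) + 2) * (2 * (J + 1) + 1) * x2).
  have hh : 0 <= (6*J+12) * x3 by apply: mulr_ge0 => //; lra.
  split; [lra|move=> hp].
  have hh' : 0 < (6*J+12) * x3 by apply: mulr_gt0 => //; lra.
  lra.
case: key => k1 k2.
split; first by rewrite -(ler_pM2l hA).
by move=> hp; rewrite -(ltr_pM2l hA); apply: k2.
Qed.

Lemma all_n s (hs : salie_gf s) n :
  (forall k, 0 <= bb s n k) /\ (forall k, 2 * bb s n k.+2 <= bb s n k.+1).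
Proof.
elim: n => [|n [H0 HM]].
  split.
    by case=> [|k]; [rewrite bb_col0 | rewrite bb_big].
  by move=> k; rewrite !bb_big // mulr0.
have P := pos_step s hs n H0.
have Hx0 : forall k, 0 <= bb s n.+1 k by move=> k; case: (P k).
split => // k; by case: (M_step _ hs _ H0 HM Hx0 k).
Qed.

Lemma eps_bb s n k : 0 <= bb s n k -> salie_eps s n k = bb s n k / 4 ^+ n.
Proof.
move=> h; rewrite -(ger0_norm h) /bb normrMsign /aa /salie_eps.
rewrite !normrM normfV !normrX (@ger0_norm _ 4) //.
have := four_neq0 n; have := four_neq0 k => h1 h2; field.
by rewrite h1 h2.
Qed.

Theorem mainTheorem8 (s : nat -> nat -> rat) (hs : salie_gf s) :
  forall n k : nat, (1 < n)%N -> (1 <= k <= n - 1)%N ->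
    2 * salie_eps s n k.+1 < salie_eps s n k /\
    \sum_(k.+1 <= l < n.+1) salie_eps s n l < salie_eps s n k.
Proof.
move=> n k hn hk.
case: n hn hk => [//|m] hn hk.
have [H0 HM] := all_n s hs m.
have P := pos_step s hs m H0.
have Hx0 : forall k, 0 <= bb s m.+1 k by move=> j; case: (P j).
have MS := M_step _ hs _ H0 HM Hx0.
case: k hk => [//|k] hk.
have hpos : 0 < bb s m.+1 k.+2 by case: (P k.+2) => _; apply; lia.
have strict : 2 * bb s m.+1 k.+2 < bb s m.+1 k.+1 by case: (MS k) => _; apply.
have h4 : 0 < (4 ^+ m.+1 : rat)^-1 by rewrite invr_gt0 exprn_gt0.
split.
  by rewrite !eps_bb // mulrA ltr_pM2r.
rewrite (eq_big_nat _ _ (F2 := fun l => bb s m.+1 l / 4 ^+ m.+1)); last first.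
  by move=> i _; rewrite eps_bb.
rewrite -mulr_suml eps_bb // ltr_pM2r //.
apply: (le_lt_trans _ strict).
apply: (le_trans (y := \sum_(k.+2 <= l < m.+2) (2 * bb s m.+1 l - 2 * bb s m.+1 l.+1))).
  apply: ler_sum_nat => i hi.
  case: i hi => [|i] hi; first by lia.
  by case: (MS i) => h _; lra.
rewrite (telescope_sumr_eq (fun l => - 2 * bb s m.+1 l)).
- by rewrite (bb_big _ hs _ _ (ltnSn m.+1)); lra.
- by lia.
- by move=> i _; ring.
Qed.
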